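(* Let $\xi$ be a random vector with support $\Xi\subset\mathbb{R}^l$ and distribution $P$, let $A\in\mathbb{R}^{n\times n}$, and let $B:\mathbb{R}^l\to\mathbb{R}^{n\times m}$, $M:\mathbb{R}^l\to\mathbb{R}^{m\times m}$, $N:\mathbb{R}^l\to\mathbb{R}^{m\times n}$ be continuous. Suppose there is a positive continuous function $\kappa$ with $\mathbb{E}[\kappa(\xi)]<+\infty$ such that for almost every $\xi$, $$\begin{pmatrix} z^T & u^T\end{pmatrix}\begin{pmatrix} A & B(\xi)\\ N(\xi) & M(\xi)\end{pmatrix}\begin{pmatrix} z\\ u\end{pmatrix}\ \ge\ \kappa(\xi)\big(\|z\|^2+\|u\|^2\big)\quad\forall z\in\mathbb{R}^n,\ u\in\mathbb{R}^m. \qquad(\ast)$$ Then the following hold, where in (ii) and (iii) $\xi$ is any point at which $(\ast)$ holds and $J$ is any subset of $\{1,\dots,m\}$: (i) $z^TAz\ge \sup_{\xi\in\Xi}\kappa(\xi)\|z\|^2$ for all $z\in\mathbb{R}^n$, and $u_J^TM_J(\xi)u_J\ge\kappa(\xi)\|u_J\|^2$ for all $u_J\in\mathbb{R}^{|J|}$ and all $J$; (ii) $A-B(\xi)U_J(M(\xi))N(\xi)$ is well defined and $z^T\big(A-B(\xi)U_J(M(\xi))N(\xi)\big)z\ge\kappa(\xi)\|z\|^2$ for all $z\in\mathbb{R}^n$; (iii) $\|M_J(\xi)^{-1}\|\le 1/\kappa(\xi)$ and $\|(A-B(\xi)U_J(M(\xi))N(\xi))^{-1}\|\le 1/\kapp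a(\xi)$.
   Context: $\|\cdot\|$ denotes the Euclidean norm on vectors and the induced 2-norm on matrices. For $J\subseteq\{1,\dots,m\}$, $D_J$ is the $m\times m$ diagonal matrix with $(D_J)_{jj}=1$ if $j\in J$ and $0$ otherwise; for an $m\times m$ matrix $M$ with $z^TMz>0$ for all $z\neq 0$ (not necessarily symmetric), $U_J(M):=(I-D_J(I-M))^{-1}D_J$. Equivalently, after permuting indices so that $J=\{1,\dots,|J|\}$, $U_J(M)=0$ if $J=\emptyset$ and $U_J(M)=\begin{pmatrix} M_J^{-1}&0\\0&0\end{pmatrix}$ otherwise, where $M_J$ is the $|J|\times|J|$ principal submatrix of $M$ indexed by $J$. *)

(* Defs.v *)
From HB Require Import structures.
From mathcomp Require Import all_boot all_order all_algebra.
From mathcomp Require Import all_classical all_reals all_analysis.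
Set Implicit Arguments. Unset Strict Implicit. Unset Printing Implicit Defensive.
Import Order.TTheory GRing.Theory Num.Theory.
Import numFieldNormedType.Exports.
Local Open Scope classical_set_scope.
Local Open Scope ring_scope.

Definition borel_rV (R : realType) (l : nat) :=
  g_sigma_algebraType (@open 'rV[R]_l).

Definition msupport (R : realType) (l : nat)
    (P : set (borel_rV R l) -> \bar R) : set 'rV[R]_l :=
  [set x | forall U : set 'rV[R]_l, open U -> U x -> (0 < P U)%E].

Definition sqnorm (R : realType) (k : nat) (z : 'cV[R]_k) : R :=
  \sum_i z i 0 ^+ 2.

Definition enorm (R : realType) (k : nat) (z : 'cV[R]_k) : R :=
  Num.sqrt (sqnorm z).

Definition qform (R : realType) (k : nat) (A : 'M[R]_k) (z : 'cV[R]_k) : R :=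
  (z^T *m A *m z) 0 0.

Definition opnorm2 (R : realType) (p q : nat) (A : 'M[R]_(p, q)) : R :=
  sup [set enorm (A *m x) | x in [set x : 'cV[R]_q | enorm x <= 1]].

Definition DJ (R : realType) (m : nat) (J : {set 'I_m}) : 'M[R]_m :=
  \matrix_(i, j) ((i == j) && (i \in J))%:R.

Definition UJpre (R : realType) (m : nat) (J : {set 'I_m}) (M : 'M[R]_m) : 'M[R]_m :=
  1%:M - DJ R J *m (1%:M - M).

Definition UJ (R : realType) (m : nat) (J : {set 'I_m}) (M : 'M[R]_m) : 'M[R]_m :=
  invmx (UJpre J M) *m DJ R J.

(* principal submatrix M_J, indexed by J enumerated in increasing order *)
Definition subJ (R : realType) (m : nat) (J : {set 'I_m}) (M : 'M[R]_m)
  : 'M[R]_#|J| :=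
  \matrix_(i, j) M (enum_val i) (enum_val j).

Definition cond_star (R : realType) (l n m : nat) (A : 'M[R]_n)
    (B : 'rV[R]_l -> 'M[R]_(n, m)) (M : 'rV[R]_l -> 'M[R]_m)
    (N : 'rV[R]_l -> 'M[R]_(m, n)) (kappa : 'rV[R]_l -> R) (xi : 'rV[R]_l) : Prop :=
  forall (z : 'cV[R]_n) (u : 'cV[R]_m),
    kappa xi * (sqnorm z + sqnorm u)
      <= qform (block_mx A (B xi) (N xi) (M xi)) (col_mx z u).

(* Main.v *)
Require Import Defs.
From HB Require Import structures.
From mathcomp Require Import all_boot all_order all_algebra.
From mathcomp Require Import all_classical all_reals all_analysis.
From mathcomp Require Import ring lra.
Import Order.TTheory GRing.Theory Num.Theory.
Import numFieldNormedType.Exports.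
Local Open Scope classical_set_scope.
Local Open Scope ring_scope.

Set Implicit Arguments. Unset Strict Implicit.
Section Alg.
Variable R : realType.

Lemma sqnormE k (z : 'cV[R]_k) : sqnorm z = (z^T *m z) 0 0.
Proof. rewrite /sqnorm !mxE; apply: eq_bigr => i _; by rewrite !mxE expr2. Qed.

Lemma sqnorm_ge0 k (z : 'cV[R]_k) : 0 <= sqnorm z.
Proof. apply: sumr_ge0 => i _; exact: sqr_ge0. Qed.

Lemma sqnorm_eq0 k (z : 'cV[R]_k) : sqnorm z = 0 -> z = 0.
Proof.
move=> h; apply/matrixP => i j; rewrite (ord1 j) mxE.
have := psumr_eq0P (fun i _ => sqr_ge0 (z i 0)) h (i:=i) isT.
by move/eqP; rewrite sqrf_eq0 => /eqP.
Qed.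

Lemma qform_block n m (A : 'M[R]_n) B N (M : 'M[R]_m) z u :
  qform (block_mx A B N M) (col_mx z u) =
  qform A z + (z^T *m B *m u) 0 0 + (u^T *m N *m z) 0 0 + qform M u.
Proof.
rewrite /qform tr_col_mx mul_row_block mul_row_col !mulmxDl !mxE.
by rewrite addrACA !addrA.
Qed.

Lemma sqnorm_col n m (z : 'cV[R]_n) (u : 'cV[R]_m) :
  sqnorm (col_mx z u) = sqnorm z + sqnorm u.
Proof.
rewrite !sqnormE tr_col_mx mul_row_col mxE //.
Qed.

Lemma sum_delta k (c : 'I_k) (F : 'I_k -> R) :
  \sum_i (c == i)%:R * F i = F c.
Proof.
rewrite (bigD1 c) //= eqxx mul1r big1 ?addr0 // => i /negbTE; rewrite eq_sym => ->.
by rewrite mul0r.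
Qed.


Lemma qform_mul k (C : 'M[R]_k) v : qform C v = \sum_i v i 0 * (C *m v) i 0.
Proof. by rewrite /qform -mulmxA mxE; apply: eq_bigr => i _; rewrite mxE. Qed.

Lemma pd_unit k (C : 'M[R]_k) kap : 0 < kap ->
  (forall v, kap * sqnorm v <= qform C v) -> C \in unitmx.
Proof.
move=> kp H; rewrite unitmxE unitfE; apply/negP => /eqP/eqP.
rewrite -det_tr => /det0P [w wn0 hw].
have Cv : C *m w^T = 0 by rewrite -[C]trmxK -trmx_mul hw trmx0.
have := H w^T; rewrite /qform -mulmxA Cv mulmx0 mxE => h.
have : sqnorm w^T <= 0 by rewrite -(pmulr_rle0 (sqnorm w^T) kp).
rewrite le_eqVlt ltNge sqnorm_ge0 orbF => /eqP /sqnorm_eq0 /eqP.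
by rewrite trmx_eq0 (negbTE wn0).
Qed.

Lemma pd_inv k (C : 'M[R]_k) kap : 0 < kap ->
  (forall v, kap * sqnorm v <= qform C v) ->
  C \in unitmx /\ opnorm2 (invmx C) <= kap^-1.
Proof.
move=> kp H; have Cu := pd_unit kp H; split => //.
apply: ge_sup.
  have e0 : enorm (0 : 'cV[R]_k) = 0.
    by rewrite /enorm /sqnorm big1 ?sqrtr0 // => i _; rewrite mxE expr0n.
  exists 0, 0; first by rewrite /= e0 ler01.
  by rewrite mulmx0 e0.
move=> _ [x /= xn <-].
set y := invmx C *m x.
have Cy : C *m y = x by rewrite /y mulKVmx.
have h1 := H y; rewrite qform_mul Cy in h1.
have h2 : 0 <= \sum_i (kap * y i 0 - x i 0) ^+ 2 by apply: sumr_ge0 => i _; exact: sqr_ge0.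
have e : \sum_i (kap * y i 0 - x i 0) ^+ 2 = kap^+2 * sqnorm y - 2 * kap * \sum_i y i 0 * x i 0 + sqnorm x.
  rewrite /sqnorm !mulr_sumr -!sumrB -big_split /=; apply: eq_bigr => i _.
  rewrite !expr2; ring.
have hx : sqnorm x <= 1.
  by move: xn; rewrite /enorm -{1}sqrtr1 ler_sqrt // ltr01.
have hy : kap ^+ 2 * sqnorm y <= 1 by nra.
have ki : 0 <= kap^-1 by rewrite invr_ge0 ltW.
rewrite /enorm -(ger0_norm ki) -sqrtr_sqr ler_sqrt; last first.
  exact: sqr_ge0.
have k2 : 0 < kap ^+ 2 by rewrite exprn_gt0.
by rewrite exprVn -div1r ler_pdivlMr // mulrC.
Qed.


Definition EJ m (J : {set 'I_m}) : 'M[R]_(m, #|J|) :=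
  \matrix_(i, k) (enum_val k == i)%:R.

Lemma EJ_tr_EJ m (J : {set 'I_m}) : (EJ J)^T *m EJ J = 1%:M.
Proof.
apply/matrixP => a b; rewrite !mxE.
rewrite (eq_bigr (fun i => (enum_val a == i)%:R * (enum_val b == i)%:R)); last first.
  by move=> i _; rewrite !mxE.
by rewrite sum_delta (inj_eq enum_val_inj) eq_sym.
Qed.

Lemma subJ_EJ m (J : {set 'I_m}) (M : 'M[R]_m) : subJ J M = (EJ J)^T *m M *m EJ J.
Proof.
apply/matrixP => a b; rewrite !mxE.
rewrite (eq_bigr (fun j => (enum_val b == j)%:R * ((EJ J)^T *m M) a j)); last first.
  by move=> j _; rewrite !mxE mulrC.
rewrite sum_delta mxE.
rewrite (eq_bigr (fun j => (enum_val a == j)%:R * M j (enum_val b))); last first.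
  by move=> j _; rewrite !mxE.
by rewrite sum_delta.
Qed.

Lemma qform_subJ m (J : {set 'I_m}) (M : 'M[R]_m) uJ :
  qform (subJ J M) uJ = qform M (EJ J *m uJ).
Proof. by rewrite /qform subJ_EJ trmx_mul !mulmxA. Qed.

Lemma sqnorm_EJ m (J : {set 'I_m}) uJ : sqnorm (EJ J *m uJ) = sqnorm uJ.
Proof.
by rewrite !sqnormE trmx_mul -mulmxA (mulmxA _ (EJ J)) EJ_tr_EJ mul1mx.
Qed.

Lemma DJ_mul m (J : {set 'I_m}) (w : 'cV[R]_m) i :
  (DJ R J *m w) i 0 = if i \in J then w i 0 else 0.
Proof.
rewrite mxE; case: ifP => iJ.
  rewrite (eq_bigr (fun j => (i == j)%:R * w j 0)) ?sum_delta //.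
  by move=> j _; rewrite mxE iJ andbT.
by rewrite big1 // => j _; rewrite mxE iJ andbF mul0r.
Qed.

Lemma UJpre_mul m (J : {set 'I_m}) (M : 'M[R]_m) (v : 'cV[R]_m) i :
  (UJpre J M *m v) i 0 = if i \in J then (M *m v) i 0 else v i 0.
Proof.
rewrite /UJpre mulmxBl mul1mx -mulmxA mulmxBl mul1mx mxE [in X in _ + X]mxE DJ_mul.
by case: ifP => _; rewrite ?mxE; [rewrite opprB addrC subrK | rewrite oppr0 addr0].
Qed.


Lemma inj_unit k (C : 'M[R]_k) : (forall v : 'cV[R]_k, C *m v = 0 -> v = 0) -> C \in unitmx.
Proof.
move=> H; rewrite unitmxE unitfE; apply/negP => /eqP/eqP.
rewrite -det_tr => /det0P [w wn0 hw].
have Cv : C *m w^T = 0 by rewrite -[C]trmxK -trmx_mul hw trmx0.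
by apply: (negP wn0); rewrite -trmx_eq0 (H _ Cv).
Qed.

Lemma sqnorm0 k : sqnorm (0 : 'cV[R]_k) = 0.
Proof. by rewrite /sqnorm big1 // => i _; rewrite mxE expr0n. Qed.

Lemma qform0 k (C : 'M[R]_k) : qform C 0 = 0.
Proof. by rewrite /qform mulmx0 mxE. Qed.

Lemma cross_sum p q (X : 'M[R]_(p, q)) (a : 'cV[R]_p) (b : 'cV[R]_q) :
  (a^T *m X *m b) 0 0 = \sum_i a i 0 * (X *m b) i 0.
Proof. by rewrite -mulmxA mxE; apply: eq_bigr => i _; rewrite mxE. Qed.

Lemma star_M n m (A : 'M[R]_n) B N (M : 'M[R]_m) kap :
  (forall z u, kap * (sqnorm z + sqnorm u) <= qform (block_mx A B N M) (col_mx z u)) ->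
  forall u, kap * sqnorm u <= qform M u.
Proof.
move=> H u; have := H 0 u; rewrite qform_block sqnorm0 add0r qform0 add0r.
by rewrite trmx0 !mul0mx mulmx0 !mxE !add0r.
Qed.

Lemma star_A n m (A : 'M[R]_n) B N (M : 'M[R]_m) kap :
  (forall z u, kap * (sqnorm z + sqnorm u) <= qform (block_mx A B N M) (col_mx z u)) ->
  forall z, kap * sqnorm z <= qform A z.
Proof.
move=> H z; have := H z 0; rewrite qform_block sqnorm0 addr0 qform0 addr0.
by rewrite trmx0 !mul0mx mulmx0 !mxE !addr0.
Qed.

Lemma schur n m (A : 'M[R]_n) B N (M : 'M[R]_m) kap (J : {set 'I_m}) :
  0 < kap ->
  (forall z u, kap * (sqnorm z + sqnorm u) <= qform (block_mx A B N M) (col_mx z u)) ->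
  UJpre J M \in unitmx /\
  forall z, kap * sqnorm z <= qform (A - B *m UJ J M *m N) z.
Proof.
move=> kp H; have pdM := star_M H.
have Pu : UJpre J M \in unitmx.
  apply: inj_unit => v Pv.
  have hv i : v i 0 * (M *m v) i 0 = 0.
    have := UJpre_mul J M v i; rewrite Pv mxE.
    by case: ifP => _ <-; rewrite ?mulr0 ?mul0r.
  have q0 : qform M v = 0 by rewrite qform_mul big1.
  have := pdM v; rewrite q0 => h.
  apply: sqnorm_eq0; apply/eqP; rewrite eq_le sqnorm_ge0 andbT.
  by rewrite -(pmulr_rle0 (sqnorm v) kp).
split => // z.
set v := UJ J M *m (N *m z).
have Pv : UJpre J M *m v = DJ R J *m (N *m z) by rewrite /v /UJ -mulmxA mulKVmx.
have hv i : v i 0 * ((N *m z) i 0 - (M *m v) i 0) = 0.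
  have := UJpre_mul J M v i; rewrite Pv DJ_mul.
  by case: ifP => _ <-; rewrite ?subrr ?mulr0 ?mul0r.
have := H z (- v).
rewrite qform_block -addrA.
have -> : ((- v)^T *m N *m z) 0 0 + qform M (- v) = 0.
  rewrite cross_sum qform_mul -big_split /= big1 // => i _.
  have e1 : (- v) i 0 = - v i 0 by rewrite mxE.
  have e2 : (- (M *m v)) i 0 = - (M *m v) i 0 by rewrite mxE.
  by rewrite mulmxN e1 e2 -mulrDr mulNr hv oppr0.
have E : qform (A - B *m UJ J M *m N) z = qform A z + (z^T *m B *m - v) 0 0.
  by rewrite /qform mulmxBr mulmxBl mulmxN mxE /v !mulmxA.
rewrite addr0 E.
move=> h; have := sqnorm_ge0 (- v); nra.
Qed.

End Alg.

Unset Implicit Arguments.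
Set Strict Implicit.

Theorem lemma2p1 (R : realType) (l n m : nat)
  (P : probability (borel_rV R l) R)
  (A : 'M[R]_n)
  (B : 'rV[R]_l -> 'M[R]_(n, m)) (M : 'rV[R]_l -> 'M[R]_m)
  (N : 'rV[R]_l -> 'M[R]_(m, n)) (kappa : 'rV[R]_l -> R) :
  continuous B -> continuous M -> continuous N ->
  continuous kappa -> (forall x, 0 < kappa x) ->
  (\int[P]_x (kappa x)%:E < +oo)%E ->
  {ae P, forall x : borel_rV R l, cond_star A B M N kappa x} ->
  (* (i) *)
  (forall z : 'cV[R]_n, forall x, msupport P x ->
      kappa x * sqnorm z <= qform A z) /\
  (forall x, cond_star A B M N kappa x ->
     forall (J : {set 'I_m}) (uJ : 'cV[R]_#|J|),
       kappa x * sqnorm uJ <= qform (subJ J (M x)) uJ) /\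
  (* (ii) *)
  (forall x, cond_star A B M N kappa x -> forall J : {set 'I_m},
     UJpre J (M x) \in unitmx /\
     forall z : 'cV[R]_n,
       kappa x * sqnorm z <= qform (A - B x *m UJ J (M x) *m N x) z) /\
  (* (iii) *)
  (forall x, cond_star A B M N kappa x -> forall J : {set 'I_m},
     subJ J (M x) \in unitmx /\
     opnorm2 (invmx (subJ J (M x))) <= (kappa x)^-1 /\
     (A - B x *m UJ J (M x) *m N x) \in unitmx /\
     opnorm2 (invmx (A - B x *m UJ J (M x) *m N x)) <= (kappa x)^-1).

Proof.
move=> _ _ _ kc kpos _ ae.
split.
  move=> z x xs; apply/ler_addgt0Pr => e e0.
  have zp := sqnorm_ge0 z.
  set e' := e / (sqnorm z + 1).
  have e'0 : 0 < e' by rewrite divr_gt0 // ltr_wpDl.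
  have e'E : e' * (sqnorm z + 1) = e by rewrite /e' divfK // lt0r_neq0 // ltr_wpDl.
  pose U := kappa @^-1` [set r | kappa x - e' < r].
  have oU : open U by apply: open_comp => [t _|]; [exact: kc | exact: open_gt].
  have Ux : U x by rewrite /U /= ltrBlDr ltrDl.
  have PU := xs U oU Ux.
  case: ae => Nb [mNb PN0 sub].
  have [y [Uy nNy]] : exists y, U y /\ ~ Nb y.
    apply: contrapT => hn.
    have UN : U `<=` Nb.
      by move=> t Ut; apply: contrapT => nt; apply: hn; exists t.
    have mU : measurable (U : set (borel_rV R l)) by exact: sub_sigma_algebra.
    have : (P U <= P Nb)%E by apply: le_measure => //; rewrite inE.
    by rewrite PN0 leNgt PU.
  have Gy : cond_star A B M N kappa y.
    by apply: contrapT => hG; apply: nNy; apply: sub.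
  have hA := star_A Gy z.
  move: Uy; rewrite /U /= => Uy.
  nra.
split.
  move=> x Gx J uJ; rewrite qform_subJ -sqnorm_EJ; exact: star_M Gx _.
split.
  move=> x Gx J; exact: schur (kpos x) Gx.
move=> x Gx J.
have [h1 h2] := pd_inv (kpos x) (fun uJ => (ltac:(rewrite qform_subJ -sqnorm_EJ; exact: star_M Gx _)) : kappa x * sqnorm uJ <= qform (subJ J (M x)) uJ).
have [_ h3] := schur J (kpos x) Gx.
have [h4 h5] := pd_inv (kpos x) h3.
by [].
Qed.
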